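(* Let $K$ be either $\mathbb{Q}$ or a quadratic field $\mathbb{Q}[\sqrt{d}]$ with $d\ne 1$ square-free, let $\mathfrak{o}_K$ be its ring of integers and $C_2=\langle g\rangle$. Then the unit group $\mathcal{U}(\mathfrak{o}_K[C_2])$ is trivial (i.e. consists only of the trivial units $ug$, $u\in\mathcal{U}(\mathfrak{o}_K)$, $g\in C_2$) if and only if $K=\mathbb{Q}$ or $K$ is imaginary quadratic, i.e. $d<0$.
   Context: A unit of the group ring $\mathfrak{o}_K[G]$ is called trivial if it is of the form $ug$ with $u\in\mathcal{U}(\mathfrak{o}_K)$ and $g\in G$. *)

(* Defs.v *)
From mathcomp Require Import all_boot all_order all_algebra all_field.
Set Implicit Arguments. Unset Strict Implicit. Unset Printing Implicit Defensive.
Import Order.TTheory GRing.Theory Num.Theory.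
Local Open Scope ring_scope.

Definition squarefree_int (d : int) : Prop :=
  d != 0 /\ forall p : nat, prime p -> ~~ (p * p %| `|d|)%N.

(* The field K = Q(sqrt d) inside algC (for d = 1 this is Q itself). *)
Definition inK (d : int) (x : algC) : Prop :=
  exists a b : rat, x = ratr a + ratr b * sqrtC (d%:~R).

Definition inOK (d : int) (x : algC) : Prop := inK d x /\ x \in Aint.

Definition unitOK (d : int) (u : algC) : Prop :=
  inOK d u /\ exists v, inOK d v /\ u * v = 1.

(* The group ring o_K[C_2], C_2 = <g>: the pair (a, b) stands for a + b g.
   Multiplication uses g^2 = 1. *)
Definition gr_mul (x y : algC * algC) : algC * algC :=
  (x.1 * y.1 + x.2 * y.2, x.1 * y.2 + x.2 * y.1).
Definition gr_one : algC * algC := (1, 0).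

Definition in_grOK (d : int) (x : algC * algC) : Prop :=
  inOK d x.1 /\ inOK d x.2.

(* Units of o_K[C_2] (the ring is commutative). *)
Definition gr_unit (d : int) (x : algC * algC) : Prop :=
  in_grOK d x /\ exists y, in_grOK d y /\ gr_mul x y = gr_one.

Definition gr_trivial_unit (d : int) (x : algC * algC) : Prop :=
  exists u, unitOK d u /\ (x = (u, 0) \/ x = (0, u)).

Definition trivial_unit_group (d : int) : Prop :=
  forall x, gr_unit d x -> gr_trivial_unit d x.

(* Main.v *)
Require Import Defs.
From mathcomp Require Import all_boot all_order all_algebra all_field.
From mathcomp Require Import zify ring lra.
Set Implicit Arguments. Unset Strict Implicit. Unset Printing Implicit Defensive.
Import Order.TTheory GRing.Theory Num.Theory.
Local Open Scope ring_scope.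


Definition fr {R : archiRealFieldType} (x : R) := x - (Num.floor x)%:~R.
Lemma fr_ge0 {R : archiRealFieldType} (x : R) : 0 <= fr x. Proof. by rewrite /fr subr_ge0 floor_le. Qed.
Lemma fr_lt1 {R : archiRealFieldType} (x : R) : fr x < 1.
Proof. by have := floorD1_gt x; rewrite /fr intrD; lra. Qed.

Lemma dirichlet {R : archiRealFieldType} (a : R) (N : nat) : (0 < N)%N ->
  exists p q : int, 0 < q /\ q <= N%:Z /\ N%:R * `|q%:~R * a - p%:~R| < 1.
Proof.
case: N => // n _.
pose g (k : nat) := Num.floor (n.+1%:R * fr (k%:R * a)).
have g0 k : 0 <= g k by rewrite floor_ge0 mulr_ge0 ?fr_ge0.
have gn k : (absz (g k) <= n)%N.
  have : g k < n.+1%:Z.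
    rewrite floor_lt_int -[X in _ < X]mulr1 pmulrn.
    by rewrite ltr_pM2l ?ltr0n // fr_lt1.
  by move: (g0 k); lia.
pose f (k : 'I_n.+2) : 'I_n.+1 := inord (absz (g k)).
have [/existsP [k /existsP [l /andP [kl /eqP fkl]]] | noex] :=
  boolP [exists k, exists l, (k != l) && (f k == f l)]; last first.
  have inj : injective f.
    move=> k l e; apply/eqP; apply/negPn/negP => ne.
    by move/negP: noex; apply; apply/existsP; exists k; apply/existsP; exists l; rewrite ne e eqxx.
  by have := leq_card f inj; rewrite !card_ord ltnn.
have gkl : g k = g l.
  move/(congr1 val): fkl; rewrite /f /= !inordK ?ltnS ?gn //.
  by move: (g0 k) (g0 l); lia.
have key : forall k l : nat, g k = g l -> (k < l)%N ->
   exists p q : int, 0 < q /\ q <= (l - k)%:Z /\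
     n.+1%:R * `|q%:~R * a - p%:~R| < 1.
  move=> k' l' e kl'.
  exists (Num.floor (l'%:R * a) - Num.floor (k'%:R * a)), (l' - k')%:Z.
  split; first by rewrite ltz_nat subn_gt0.
  split; first by [].
  have -> : (l' - k')%:Z%:~R * a - (Num.floor (l'%:R * a) - Num.floor (k'%:R * a))%:~R
     = fr (l'%:R * a) - fr (k'%:R * a).
    rewrite /fr intrD intrN -pmulrn natrB 1?ltnW //; ring.
  have h1 := floor_itv (n.+1%:R * fr (l'%:R * a)).
  have h2 := floor_itv (n.+1%:R * fr (k'%:R * a)).
  rewrite -/(g l') -/(g k') e in h1 h2.
  move: h1 h2; rewrite intrD => /andP [h1 h1'] /andP [h2 h2'].
  rewrite -[n.+1%:R in X in X < _]ger0_norm ?ler0n // -normrM ltr_norml; apply/andP; split; lra.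
have kln : (k : nat) != l by apply: contra kl => /eqP e; apply/eqP/val_inj.
have lek : (l - k <= n.+1)%N by have := ltn_ord l; lia.
have lek' : (k - l <= n.+1)%N by have := ltn_ord k; lia.
case: (ltngtP k l) kln => // H _.
  have [p [q [h1 [h2 h3]]]] := key _ _ gkl H.
  exists p, q; split => //; split => //; apply: le_trans h2 _; rewrite lez_nat //.
have [p [q [h1 [h2 h3]]]] := key _ _ (esym gkl) H.
exists p, q; split => //; split => //; apply: le_trans h2 _; rewrite lez_nat //.
Qed.


Lemma lt1_le (x y : int) : x < 1 + y -> x <= y.
Proof. lia. Qed.

Lemma pell_bound (R : archiRealFieldType) (a : R) (d : int) :
  0 <= a -> a ^+ 2 = d%:~R -> 1 <= d -> forall p q (N : nat), 0 < q -> q <= N%:Z ->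
  N%:R * `|q%:~R * a - p%:~R| < 1 -> `|p ^+ 2 - d * q ^+ 2| <= 2 * d.
Proof.
move=> a0 a2 d1 p q N q0 qN H.
have a0' : (0:R) <= a by [].
have hQ : 1 <= (q%:~R : R) by rewrite ler1z.
have hQN : (q%:~R : R) <= N%:R by rewrite -[N%:R]/((N%:Z)%:~R) ler_int.
set Q := (q%:~R : R) in hQ hQN H *.
set P := (p%:~R : R) in H *.
have hd : (1 : R) <= d%:~R by rewrite ler1z.
have ha2 : 1 <= a ^+ 2 by rewrite a2.
have ha1 : 1 <= a.
  case: (lerP 1 a) => // h; exfalso.
  have : a * a <= a * 1 by apply: ler_wpM2l => //; exact: ltW.
  rewrite -expr2 mulr1 => H2; lra.
have had : a <= d%:~R.
  by rewrite -a2 expr2; have := ler_wpM2l a0' ha1; rewrite mulr1.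
set t := `|Q * a - P| in H.
have t0 : 0 <= t by exact: normr_ge0.
have he : Q * t < 1 by apply: le_lt_trans H; apply: ler_wpM2r.
have t1 : t < 1.
  by apply: le_lt_trans he; rewrite -[X in X <= _]mul1r; apply: ler_wpM2r.
have key : `|P ^+ 2 - d%:~R * Q ^+ 2| < 1 + 2 * d%:~R.
  have -> : P ^+ 2 - d%:~R * Q ^+ 2 = (P - Q * a) * ((P - Q * a) + 2 * Q * a).
    by rewrite -a2; ring.
  rewrite normrM.
  have -> : `|P - Q * a| = t by rewrite /t distrC.
  have h2 : `|(P - Q * a) + 2 * Q * a| <= t + 2 * Q * a.
    apply: le_trans (ler_normD _ _) _.
    rewrite /t distrC lerD2l ger0_norm //.
    by rewrite !mulr_ge0 // (le_trans ler01).
  apply: (le_lt_trans (ler_wpM2l t0 h2)).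
  have htt : t * t <= t by rewrite -[X in _ <= X]mulr1; apply: ler_wpM2l => //; exact: ltW.
  have hqt : a * (Q * t) <= a by rewrite -[X in _ <= X]mulr1; apply: ler_wpM2l => //; exact: ltW.
  have -> : t * (t + 2 * Q * a) = t * t + 2 * (a * (Q * t)) by ring.
  lra.
have : (`|p ^+ 2 - d * q ^+ 2|%:~R : R) < (1 + 2 * d)%:~R.
  rewrite intr_norm !expr2 intrB !intrM intrD intrM -/P -/Q.
  by move: key; rewrite !expr2.
rewrite ltr_int; apply: lt1_le.
Qed.


Lemma combine (d p1 q1 p2 q2 k : int) : k != 0 ->
  p1 ^+ 2 - d * q1 ^+ 2 = k -> p2 ^+ 2 - d * q2 ^+ 2 = k ->
  (k %| p1 - p2)%Z -> (k %| q1 - q2)%Z -> 0 < q1 -> 0 < q2 ->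
  (p1, q1) != (p2, q2) -> exists x y : int, y != 0 /\ x ^+ 2 - d * y ^+ 2 = 1.
Proof.
move=> k0 e1 e2 /dvdzP [u hu] /dvdzP [v hv] q10 q20 ne.
have hX : (k %| p1 * p2 - d * q1 * q2)%Z.
  apply/dvdzP; exists (1 - p1 * u + d * q1 * v).
  have -> : p1 * p2 - d * q1 * q2 = p1 * (p2 - p1) + (p1 ^+ 2 - d * q1 ^+ 2) + d * q1 * (q1 - q2) by ring.
  rewrite e1 hv; have -> : p2 - p1 = - (u * k) by rewrite -hu; ring.
  ring.
have hY : (k %| p1 * q2 - p2 * q1)%Z.
  apply/dvdzP; exists (- p1 * v + q1 * u).
  have -> : p1 * q2 - p2 * q1 = - p1 * (q1 - q2) + q1 * (p1 - p2) by ring.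
  rewrite hu hv; ring.
case/dvdzP: hX => x hx; case/dvdzP: hY => y hy.
exists x, y; split.
  apply/negP => /eqP y0; move: hy; rewrite y0 mul0r => /eqP; rewrite subr_eq0 => /eqP hy.
  have hq : k * (q2 ^+ 2 - q1 ^+ 2) = 0.
    rewrite mulrBr -{1}e1 -e2.
    have -> : (p1 ^+ 2 - d * q1 ^+ 2) * q2 ^+ 2 = (p1 * q2) ^+ 2 - d * q1 ^+ 2 * q2 ^+ 2 by ring.
    rewrite hy; ring.
  move/eqP: hq; rewrite mulf_eq0 (negbTE k0) /= subr_eq0 => /eqP hq.
  have qq : q1 = q2.
    have : (q2 - q1) * (q2 + q1) = 0 by rewrite -subr_sqr hq subrr.
    move/eqP; rewrite mulf_eq0 => /orP [|]; first by rewrite subr_eq0 => /eqP.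
    by move=> /eqP h; exfalso; move: h q10 q20; lia.
  move: hy; rewrite qq => /(mulIf _) pp.
  by move/eqP: ne; apply; rewrite qq pp // gt_eqF.
apply: (mulIf (expf_neq0 2 k0)); rewrite mul1r.
have -> : (x ^+ 2 - d * y ^+ 2) * k ^+ 2 = (x * k) ^+ 2 - d * (y * k) ^+ 2 by ring.
rewrite -hx -hy.
have -> : k ^+ 2 = (p1 ^+ 2 - d * q1 ^+ 2) * (p2 ^+ 2 - d * q2 ^+ 2) by rewrite e1 e2 expr2.
ring.
Qed.


Lemma absz_inj0 (a b : int) : 0 <= a -> 0 <= b -> absz a = absz b -> a = b.
Proof. lia. Qed.

Lemma abs_le_shift (a : int) (M : nat) : `|a| <= M%:Z -> 0 <= a + M%:Z.
Proof. lia. Qed.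

Lemma pigeon (K : int * int -> int) (M : nat) (s : seq (int * int)) :
  uniq s -> ((2 * M + 1) * M * M < size s)%N ->
  (forall x, x \in s -> K x != 0 /\ `|K x| <= M%:Z) ->
  exists x y, [/\ x \in s, y \in s, x != y, K x = K y &
     ((x.1 %% K x)%Z = (y.1 %% K x)%Z /\ (x.2 %% K x)%Z = (y.2 %% K x)%Z)].
Proof.
move=> us ss hK.
pose c (x : int * int) : nat * nat * nat :=
  (absz (K x + M%:Z), absz (x.1 %% K x)%Z, absz (x.2 %% K x)%Z).
pose T := [seq (ij, l) | ij <- [seq (i, j) | i <- iota 0 (2 * M + 1), j <- iota 0 M],
                          l <- iota 0 M].
have sub : {subset map c s <= T}.
  move=> z /mapP [x xs ->]; have [k0 kM] := hK x xs.
  have h1 := modz_ge0 x.1 k0; have h2 := ltz_mod x.1 k0.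
  have h3 := modz_ge0 x.2 k0; have h4 := ltz_mod x.2 k0.
  rewrite /c; move: h1 h2 h3 h4 k0 kM.
  move: (x.1 %% K x)%Z (x.2 %% K x)%Z (K x) => r1 r2 k h1 h2 h3 h4 k0 kM.
  apply: allpairs_f; first apply: allpairs_f.
  - rewrite mem_iota /=; lia.
  - rewrite mem_iota /=; lia.
  - rewrite mem_iota /=; lia.
have [/hasP [x xs /hasP [y ys /andP [xy /eqP cxy]]] | nh] :=
  boolP (has (fun x => has (fun y => (x != y) && (c x == c y)) s) s); last first.
  have inj : {in s &, injective c}.
    move=> x y xs ys e; apply/eqP; apply/negPn/negP => ne.
    by move/negP: nh; apply; apply/hasP; exists x => //; apply/hasP; exists y; rewrite // ne e eqxx.
  have := uniq_leq_size _ sub; rewrite map_inj_in_uniq // us size_map => /(_ isT).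
  by rewrite !size_allpairs !size_iota => /(leq_ltn_trans) /(_ ss); rewrite ltnn.
have [k0 kM] := hK x xs; have [k0' kM'] := hK y ys.
move: cxy; rewrite /c => -[e1 e2 e3].
have kk : K x = K y.
  have /addIr : K x + M%:Z = K y + M%:Z.
    by apply: absz_inj0 e1; apply: abs_le_shift.
  done.
exists x, y; split => //; split.
- by rewrite -kk in e2; apply: absz_inj0 e2; rewrite modz_ge0.
- by rewrite -kk in e3; apply: absz_inj0 e3; rewrite modz_ge0.
Qed.


Lemma err_pos (R : archiRealFieldType) (a : R) (d : int) :
  a ^+ 2 = d%:~R -> (forall p q : int, q != 0 -> p ^+ 2 != d * q ^+ 2) ->
  forall p q : int, 0 < q -> 0 < `|q%:~R * a - p%:~R|.
Proof.
move=> a2 nsq p q q0; rewrite normr_gt0 subr_eq0; apply/negP => /eqP e.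
have /negP := nsq p q (lt0r_neq0 q0); apply; apply/eqP.
apply: (@intr_inj R).
rewrite !expr2 intrM intrM intrM -e -a2; ring.
Qed.

Lemma get_N (R : archiRealFieldType) (a : R) (d : int) :
  a ^+ 2 = d%:~R -> (forall p q : int, q != 0 -> p ^+ 2 != d * q ^+ 2) ->
  forall s : seq (int * int), (forall x, x \in s -> 0 < x.2) ->
  exists N : nat, (0 < N)%N /\
    forall x, x \in s -> 1 <= N%:R * `|x.2%:~R * a - x.1%:~R|.
Proof.
move=> a2 nsq; elim => [|x s IH] hs.
  by exists 1%N; split.
have [N2 [N20 HN2]] := IH (fun y ys => hs y (@mem_behead _ (x :: s) _ ys)).
have ep := err_pos a2 nsq x.1 (hs x (mem_head _ _)).
set e := `|_| in ep.
have ei : 0 < e^-1 by rewrite invr_gt0.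
have hb := archi_boundP (ltW ei).
set N1 := Num.bound _ in hb.
exists (N1 + N2)%N; split; first by rewrite addn_gt0 N20 orbT.
move=> y; rewrite in_cons => /orP [/eqP -> | ys].
  rewrite -/e natrD mulrDl.
  have h1 : 1 <= N1%:R * e.
    by rewrite -[X in X <= _](mulVf (lt0r_neq0 ep)); apply: ler_wpM2r; [exact: ltW ep | exact: ltW hb].
  by apply: le_trans h1 _; rewrite lerDl mulr_ge0 // ltW.
apply: le_trans (HN2 y ys) _.
by rewrite natrD mulrDl lerDr mulr_ge0.
Qed.

Lemma many (R : archiRealFieldType) (a : R) (d : int) :
  0 <= a -> a ^+ 2 = d%:~R -> 1 <= d ->
  (forall p q : int, q != 0 -> p ^+ 2 != d * q ^+ 2) ->
  forall n : nat, exists s : seq (int * int), [/\ uniq s, size s = n &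
    forall x, x \in s -> 0 < x.2 /\ `|x.1 ^+ 2 - d * x.2 ^+ 2| <= 2 * d].
Proof.
move=> a0 a2 d1 nsq; elim => [|n [s [us ss hs]]].
  by exists [::]; split.
have [N [N0 HN]] := get_N a2 nsq (fun x xs => (hs x xs).1).
have [p [q [q0 [qN Hpq]]]] := dirichlet a N0.
exists ((p, q) :: s); split.
- rewrite /= us andbT; apply/negP => ps.
  by have := HN _ ps; rewrite /= leNgt Hpq.
- by rewrite /= ss.
- move=> x; rewrite in_cons => /orP [/eqP -> | xs]; last exact: hs.
  by split => //; exact: pell_bound Hpq.
Qed.


Lemma absz2d (d : int) : 1 <= d -> (absz (2 * d))%:Z = 2 * d.
Proof. lia. Qed.

Lemma pell_gen (R : archiRealFieldType) (a : R) (d : int) :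
  0 <= a -> a ^+ 2 = d%:~R -> 1 <= d ->
  (forall p q : int, q != 0 -> p ^+ 2 != d * q ^+ 2) ->
  exists x y : int, y != 0 /\ x ^+ 2 - d * y ^+ 2 = 1.
Proof.
move=> a0 a2 d1 nsq.
pose M := absz (2 * d).
have [s [us ss hs]] := many a0 a2 d1 nsq ((2 * M + 1) * M * M).+1.
pose K (x : int * int) := x.1 ^+ 2 - d * x.2 ^+ 2.
have hK : forall x, x \in s -> K x != 0 /\ `|K x| <= M%:Z.
  move=> x xs; have [q0 hb] := hs x xs; split.
    by rewrite /K subr_eq0; apply: nsq; rewrite lt0r_neq0.
  by rewrite /M absz2d.
have ss' : ((2 * M + 1) * M * M < size s)%N by rewrite ss.
have [[p1 q1] [[p2 q2] [xs ys xy kk [m1 m2]]]] := pigeon us ss' hK.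
have [q10 _] := hs _ xs; have [q20 _] := hs _ ys.
apply: (@combine d p1 q1 p2 q2 (K (p1, q1))) => //.
all: try by have [] := hK _ xs.
all: try by rewrite kk.
all: by rewrite -eqz_mod_dvd; apply/eqP.
Qed.

Lemma nonsq (d : int) : (d != 0 /\ forall p : nat, prime p -> ~~ (p * p %| `|d|)%N) ->
  1 < d -> forall p q : int, q != 0 -> p ^+ 2 != d * q ^+ 2.
Proof.
move=> [d0 sqf] d1 p q q0; apply/negP => /eqP e.
have e' : (absz p ^ 2 = absz d * absz q ^ 2)%N.
  by rewrite -!abszX -abszM e.
have dg1 : (1 < absz d)%N by lia.
have pr := pdiv_prime dg1.
set r := pdiv (absz d) in pr.
have rd : (r %| absz d)%N by exact: pdiv_dvd.
have q0' : (0 < absz q)%N by rewrite absz_gt0.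
have d0' : (0 < absz d)%N by lia.
have p0' : (0 < absz p)%N.
  have : (0 < absz d * absz q ^ 2)%N by rewrite muln_gt0 d0' expn_gt0 q0'.
  by rewrite -e' expn_gt0 orbF.
have l1 : (0 < logn r (absz d))%N by rewrite logn_gt0 mem_primes pr d0' rd.
have l2 : (logn r (absz d) < 2)%N.
  rewrite ltnNge -pfactor_dvdn //; exact: sqf.
have := congr1 (logn r) e'.
rewrite lognM // ?expn_gt0 ?q0' // !lognX; lia.
Qed.

Lemma pell (d : int) : (d != 0 /\ forall p : nat, prime p -> ~~ (p * p %| `|d|)%N) ->
  1 < d -> exists x y : int, y != 0 /\ x ^+ 2 - d * y ^+ 2 = 1.
Proof.
move=> hd d1.
apply: (@pell_gen algR (Num.sqrt (d%:~R))).
- exact: sqrtr_ge0.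
- by rewrite sqr_sqrtr // ler0z; lia.
- lia.
- exact: nonsq.
Qed.


Lemma inK_add d x y : inK d x -> inK d y -> inK d (x + y).
Proof.
move=> [a1 [b1 ->]] [a2 [b2 ->]]; exists (a1 + a2), (b1 + b2).
rewrite !rmorphD /=; ring.
Qed.

Lemma inK_opp d x : inK d x -> inK d (- x).
Proof. move=> [a1 [b1 ->]]; exists (- a1), (- b1); rewrite !rmorphN /=; ring. Qed.

Lemma inK_sub d x y : inK d x -> inK d y -> inK d (x - y).
Proof. by move=> hx hy; apply: inK_add hx (inK_opp hy). Qed.

Lemma normK_rat d z : (d = 1 \/ d < 0) -> inK d z -> z * z^* \in Crat.
Proof.
move=> h [a [b ->]].
set s := sqrtC (d%:~R : algC).
have ess : s * s = d%:~R by rewrite -expr2 sqrtCK.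
have hs : s^* = s \/ s^* = - s.
  have h1 : s^* ^+ 2 = d%:~R by rewrite -rmorphXn /= sqrtCK conj_intr // intr_int.
  have : (s^* - s) * (s^* + s) = 0 by rewrite -subr_sqr h1 sqrtCK subrr.
  move/eqP; rewrite mulf_eq0 subr_eq0 addr_eq0 => /orP [/eqP -> | /eqP ->]; by [left | right].
move: (ratr a) (ratr b) (Crat_rat a) (Crat_rat b) => A B hA hB.
rewrite rmorphD rmorphM /= (conj_Crat hA) (conj_Crat hB).
case: h => [d1 | dn].
  have s1 : s = 1 by rewrite /s d1 sqrtC1.
  by rewrite s1 ?conjC1 !mulr1 rpredM ?rpredD.
case: hs => hs.
  exfalso.
  have : 0 <= s * s^* by rewrite -normCK exprn_ge0.
  by rewrite hs ess ler0z leNgt dn.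
rewrite hs.
have -> : (A + B * s) * (A + B * - s) = A ^+ 2 - B ^+ 2 * (s * s) by ring.
by rewrite ess rpredB ?rpredM ?rpredX ?rpred_int.
Qed.

Lemma normK_int d z : (d = 1 \/ d < 0) -> inOK d z ->
  z * z^* \is a Num.int /\ 0 <= z * z^*.
Proof.
move=> h [hK hA]; split; last by rewrite -normCK exprn_ge0.
apply: Cint_rat_Aint; first exact: (normK_rat h hK).
by rewrite rpredM // Aint_aut.
Qed.

Lemma nat_mul1 (a b : algC) : a \is a Num.int -> 0 <= a -> b \is a Num.int -> 0 <= b ->
  a * b = 1 -> a = 1.
Proof.
move=> ai a0 bi b0 e.
have /natrP [n an] : a \is a Num.nat by rewrite natrEint ai.
have /natrP [m bm] : b \is a Num.nat by rewrite natrEint bi.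
move: e; rewrite an bm -natrM => /eqP; rewrite pnatr_eq1 muln_eq1 => /andP [/eqP -> _].
done.
Qed.

Lemma nat_sum1 (a b : algC) : a \is a Num.int -> 0 <= a -> b \is a Num.int -> 0 <= b ->
  a + b = 1 -> a = 0 \/ b = 0.
Proof.
move=> ai a0 bi b0 e.
have /natrP [n an] : a \is a Num.nat by rewrite natrEint ai.
have /natrP [m bm] : b \is a Num.nat by rewrite natrEint bi.
move: e; rewrite an bm -natrD => /eqP; rewrite pnatr_eq1 => /eqP e.
have [n0|n0] : (n = 0 \/ m = 0)%N by lia.
  by left; rewrite n0.
by right; rewrite n0.
Qed.

Lemma normK_eq0 (z : algC) : z * z^* = 0 -> z = 0.
Proof. by rewrite -normCK => /eqP; rewrite expf_eq0 /= normr_eq0 => /eqP. Qed.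


Lemma sqrt_Aint (d : int) : sqrtC (d%:~R : algC) \in Aint.
Proof.
apply: (@root_monic_Aint ('X^2 - (d%:~R)%:P)).
- by rewrite /root !hornerE sqrtCK subrr.
- exact: monicXnsubC.
- by rewrite polyOverXnsubC intr_int.
Qed.

Lemma inOK_int d (x : int) : inOK d x%:~R.
Proof.
split; last exact: Aint_int.
by exists x%:~R, 0; rewrite ratr_int rmorph0 mul0r addr0.
Qed.

Lemma inOK_ints d (y : int) : inOK d (y%:~R * sqrtC d%:~R).
Proof.
split; last by rewrite rpredM ?Aint_int ?sqrt_Aint.
by exists 0, y%:~R; rewrite ratr_int rmorph0 add0r.
Qed.

Lemma triv_dir (d : int) : squarefree_int d -> trivial_unit_group d -> d = 1 \/ d < 0.
Proof.
move=> hd tr.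
have [dn|dp] := ltP d 0; first by right.
have [d1|d1] := eqVneq d 1; first by left.
have dg : 1 < d by case: hd => d0 _; move: d0 d1 dp; lia.
have [x [y [y0 e]]] := pell hd dg.
set s := sqrtC (d%:~R : algC).
have ess : s * s = d%:~R by rewrite -expr2 sqrtCK.
have hu : gr_unit d (x%:~R, y%:~R * s).
  split; first by split; [exact: inOK_int | exact: inOK_ints].
  exists (x%:~R, - (y%:~R * s)); split.
    by split; [exact: inOK_int | rewrite -mulNr -intrN; exact: inOK_ints].
  rewrite /gr_mul /gr_one /=; congr (_, _); last by ring.
  have -> : x%:~R * x%:~R + y%:~R * s * - (y%:~R * s) = (x ^+ 2 - d * y ^+ 2)%:~R :> algC.
    by rewrite !expr2 intrB !intrM -ess; ring.
  by rewrite e.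
have [u [_ [[_ e2] | [e1 _]]]] := tr _ hu.
  move/eqP: e2; rewrite mulf_eq0 intr_eq0 (negbTE y0) /= => /eqP s0.
  by move: ess; rewrite s0 mul0r => /eqP; rewrite eq_sym intr_eq0 => /eqP d0; move: dg; rewrite d0.
move/eqP: e1; rewrite intr_eq0 => /eqP x0.
move: e; rewrite x0 expr0n /= sub0r => e.
have : 0 <= d * y ^+ 2 by rewrite mulr_ge0 ?sqr_ge0 //; lia.
by move: e; lia.
Qed.

Lemma triv_conv (d : int) : d = 1 \/ d < 0 -> trivial_unit_group d.
Proof.
move=> h [al be] [[/= hal hbe] [[ga de] [[/= hga hde] e]]].
move: e; rewrite /gr_mul /gr_one /= => -[e1 e2].
pose N (z : algC) := z * z^*.
have NM z w : N (z * w) = N z * N w by rewrite /N rmorphM /=; ring.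
have N1 : N 1 = 1 by rewrite /N rmorph1 mulr1.
have okD : inOK d (al + be) /\ inOK d (ga + de) /\ inOK d (al - be) /\ inOK d (ga - de).
  case: hal hbe hga hde => [k1 a1] [k2 a2] [k3 a3] [k4 a4].
  split; first by split; [exact: inK_add | exact: rpredD].
  split; first by split; [exact: inK_add | exact: rpredD].
  split; first by split; [exact: inK_sub | exact: rpredB].
  by split; [exact: inK_sub | exact: rpredB].
case: okD => oku [okuu [okv okvv]].
have Nu : N (al + be) = 1.
  have [i1 p1] := normK_int h oku; have [i2 p2] := normK_int h okuu.
  apply: (nat_mul1 i1 p1 i2 p2).
  rewrite -NM -N1; congr N.
  have -> : (al + be) * (ga + de) = (al * ga + be * de) + (al * de + be * ga) by ring.
  by rewrite e1 e2 addr0.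
have Nv : N (al - be) = 1.
  have [i1 p1] := normK_int h okv; have [i2 p2] := normK_int h okvv.
  apply: (nat_mul1 i1 p1 i2 p2).
  rewrite -NM -N1; congr N.
  have -> : (al - be) * (ga - de) = (al * ga + be * de) - (al * de + be * ga) by ring.
  by rewrite e1 e2 subr0.
have par : N al + N be = 1.
  have : N (al + be) + N (al - be) = 2 * (N al + N be).
    by rewrite /N rmorphD rmorphB /=; ring.
  rewrite Nu Nv => H; apply: (@mulfI _ 2); first by rewrite pnatr_eq0.
  by rewrite -H mulr1.
have [i1 p1] := normK_int h hal; have [i2 p2] := normK_int h hbe.
case: (nat_sum1 i1 p1 i2 p2 par) => /normK_eq0 z0.
  exists be; split; last by right; rewrite z0.
  split => //; exists de; split => //.
  by rewrite -e1 z0 mul0r add0r.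
exists al; split; last by left; rewrite z0.
split => //; exists ga; split => //.
by rewrite -e1 z0 mul0r addr0.
Qed.


Theorem mainTheorem6 (d : int) (hd : squarefree_int d) :
  trivial_unit_group d <-> (d = 1 \/ d < 0).
Proof.
split; [exact: triv_dir | exact: triv_conv].
Qed.
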